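(* Let $C\subseteq\mathbb{R}^n$ be a nonempty compact convex set with diameter $D$, and let $f:\mathbb{R}^n\to\mathbb{R}$ be an abs-smooth function that is convex on $C$, with curvature constant $\mathcal{C}_f$ on $C$. Let $x^*\in C$ be a minimizer of $f$ on $C$ and fix $\epsilon\ge0$. Consider the relaxed ASFW iteration: $x_0\in C$, and for $t=0,1,2,\dots$ set $a_t=2t+2$, $A_t=\sum_{i=0}^t a_i=(t+1)(t+2)$, $\alpha_t=a_t/A_t=2/(t+2)$, choose $v_t\in C$ with $$\Delta f(x_t;\alpha_t(v_t-x_t))\le\min_{w\in C}\Delta f(x_t;\alpha_t(w-x_t))+\tfrac12\epsilon\alpha_t^2\mathcal{C}_f,$$ and set $x_{t+1}=(1-\alpha_t)x_t+\alpha_t v_t$. Define $$L_t=\frac{1}{A_t}\Big(\sum_{i=0}^t a_i f(x_i)+\sum_{i=0}^t a_i\Big[\frac{\Delta f(x_i;\alpha_i(v_i-x_i))}{\alpha_i}-\frac{\alpha_i}{2}\mathcal{C}_f(1+\epsilon)\Big]\Big)$$ and $G_t=f(x_{t+1})-L_t$. Then for every $t\ge0$, $$f(x_{t+1})-f(x^* )\le G_t\le\frac{4\,\mathcal{C}_f}{t+2}(1+\epsilon).$$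
   Context: A function $f:\mathbb{R}^n\to\mathbb{R}$ is abs-smooth if it is locally Lipschitz and admits an abs-smooth form: for some $s\in\mathbb{N}\cup\{0\}$ there are $F=(F_1,\dots,F_s)\in\mathcal{C}^d(\mathbb{R}^{n+s+s},\mathbb{R}^s)$ and $\varphi\in\mathcal{C}^d(\mathbb{R}^{n+s},\mathbb{R})$ with $d\ge1$ such that $y=f(x)$ is computed by $z_i=F_i(x,z_1,\dots,z_{i-1},|z_1|,\dots,|z_{i-1}|)$ for $i=1,\dots,s$ and $y=\varphi(x,z)$. For a point $\mathring{x}$, write $\mathring z=z(\mathring x)$ and let $Z=\partial_x F$, $M=\partial_z F$, $L=\partial_{|z|}F$ (evaluated at $(\mathring x,\mathring z,|\mathring z|)$; $M,L$ strictly lower triangular), $a=\partial_x\varphi$, $b=\partial_z\varphi$ (evaluated at $(\mathring x,\mathring z)$). The piecewise linearization of $f$ at $\mathring x$ is $f_{PL,\mathring x}(x)=d_0+a^Tx+b^Tz$ where $z$ solves $z=c+Zx+Mz+L|z|$, with constants $c,d_0$ chosen so that $f_{PL,\mathring x}(\mathring x)=f(\mathring x)$ (namely $c=\mathring z-Z\mathring x-M\mathring z-L|\mathring z|$, $d_0=f(\mathring x)-a^T\mathring x-b^T\mathring z$). The abs-linearization is $\Delta f(\mathring x;x-\mathring x):=f_{PL,\mathring x}(x)-f(\mathring x)$. The curvature constant of $f$ on $C$ is $$\mathcal{C}_f:=\sup_{x,v\in C,\ \alpha\in(0,1],\ y=x+\alpha(v-x)}\frac{2}{\alpha^2}\big|f(y)-f(x)-\Delta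 f(x;y-x)\big|,$$ which is finite for compact $C$. *)

(* Defs.v *)
From HB Require Import structures.
From mathcomp Require Import all_boot all_order all_algebra.
From mathcomp Require Import all_classical all_reals all_analysis.
Set Implicit Arguments. Unset Strict Implicit. Unset Printing Implicit Defensive.
Import Order.TTheory GRing.Theory Num.Theory.
Import numFieldNormedType.Exports.
Local Open Scope classical_set_scope.
Local Open Scope ring_scope.

Definition absv {R : realType} {s : nat} (z : 'rV[R]_s) : 'rV[R]_s :=
  map_mx (fun t => `|t|) z.

(* Sequential evaluation of z_i = G_i(x, z_1..z_{i-1}, |z_1|..|z_{i-1}|),
   i = 1..s: at step k the k-th entry is computed from the entries < k
   (entries >= k are still 0 and, by [tri_dep], irrelevant). *)
Definition seq_solve {R : realType} {n s : nat}
  (G : 'rV[R]_n -> 'rV[R]_s -> 'rV[R]_s -> 'rV[R]_s) (x : 'rV[R]_n) : 'rV[R]_s :=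
  iteri s (fun k w => \row_j (if nat_of_ord j == k then G x w (absv w) 0 j else w 0 j)) 0.

Definition tri_dep {R : realType} {n s : nat}
  (F : 'rV[R]_n * 'rV[R]_s * 'rV[R]_s -> 'rV[R]_s) : Prop :=
  forall (x : 'rV[R]_n) (z w z' w' : 'rV[R]_s) (i : 'I_s),
    (forall j : 'I_s, (j < i)%N -> z 0 j = z' 0 j /\ w 0 j = w' 0 j) ->
    F (x, z, w) 0 i = F (x, z', w') 0 i.

(* continuously differentiable (C^1): differentiable everywhere with
   continuous directional derivatives (= continuous differential, finite dim.) *)
Definition C1 {R : realType} {U V : normedModType R} (g : U -> V) : Prop :=
  (forall p, differentiable g p) /\ (forall u : U, continuous (fun p => 'd g p u)).

Definition loc_lipschitz {R : realType} {n : nat} (f : 'rV[R]_n -> R) : Prop :=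
  forall x, exists r : R, 0 < r /\ exists K : R,
    forall y z, ball x r y -> ball x r z -> `|f y - f z| <= K * `|y - z|.

Definition zfun {R : realType} {n s : nat}
  (F : 'rV[R]_n * 'rV[R]_s * 'rV[R]_s -> 'rV[R]_s) (x : 'rV[R]_n) : 'rV[R]_s :=
  seq_solve (fun x z w => F (x, z, w)) x.

Definition evalf {R : realType} {n s : nat}
  (F : 'rV[R]_n * 'rV[R]_s * 'rV[R]_s -> 'rV[R]_s) (phi : 'rV[R]_n * 'rV[R]_s -> R)
  (x : 'rV[R]_n) : R := phi (x, zfun F x).

Definition abs_smooth_form {R : realType} {n s : nat} (f : 'rV[R]_n -> R)
  (F : 'rV[R]_n * 'rV[R]_s * 'rV[R]_s -> 'rV[R]_s) (phi : 'rV[R]_n * 'rV[R]_s -> R) : Prop :=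
  [/\ loc_lipschitz f, C1 F, C1 phi, tri_dep F & forall x, f x = evalf F phi x].

Definition fPL {R : realType} {n s : nat}
  (F : 'rV[R]_n * 'rV[R]_s * 'rV[R]_s -> 'rV[R]_s) (phi : 'rV[R]_n * 'rV[R]_s -> R)
  (xo : 'rV[R]_n) (x : 'rV[R]_n) : R :=
  let zo := zfun F xo in
  let p := (xo, zo, absv zo) in
  let Z := fun u => 'd F p (u, 0, 0) in
  let M := fun u => 'd F p (0, u, 0) in
  let L := fun u => 'd F p (0, 0, u) in
  let a := fun u => 'd phi (xo, zo) (u, 0) in
  let b := fun u => 'd phi (xo, zo) (0, u) in
  let c := zo - Z xo - M zo - L (absv zo) in
  let d0 := evalf F phi xo - a xo - b zo in
  d0 + a x + b (seq_solve (fun x z w => c + Z x + M z + L w) x).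

Definition abs_lin {R : realType} {n s : nat}
  (F : 'rV[R]_n * 'rV[R]_s * 'rV[R]_s -> 'rV[R]_s) (phi : 'rV[R]_n * 'rV[R]_s -> R)
  (xo dx : 'rV[R]_n) : R :=
  fPL F phi xo (xo + dx) - evalf F phi xo.

Definition curv_set {R : realType} {n : nat} (f : 'rV[R]_n -> R)
  (Df : 'rV[R]_n -> 'rV[R]_n -> R) (C : set 'rV[R]_n) : set R :=
  [set r | exists x v : 'rV[R]_n, exists alpha : R,
     [/\ C x, C v, 0 < alpha, alpha <= 1 &
      r = 2 / alpha ^+ 2 * `|f (x + alpha *: (v - x)) - f x - Df x (alpha *: (v - x))|]].

Definition curv_const {R : realType} {n : nat} (f : 'rV[R]_n -> R)
  (Df : 'rV[R]_n -> 'rV[R]_n -> R) (C : set 'rV[R]_n) : R :=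
  sup (curv_set f Df C).

Definition cvx_set {R : realType} {n : nat} (C : set 'rV[R]_n) : Prop :=
  forall x y, C x -> C y -> forall t : R, 0 <= t <= 1 -> C (t *: x + (1 - t) *: y).

Definition cvx_on {R : realType} {n : nat} (f : 'rV[R]_n -> R) (C : set 'rV[R]_n) : Prop :=
  forall x y, C x -> C y -> forall t : R, 0 <= t <= 1 ->
    f (t *: x + (1 - t) *: y) <= t * f x + (1 - t) * f y.

Definition aw {R : realType} (t : nat) : R := (2 * t + 2)%N%:R.
Definition Aw {R : realType} (t : nat) : R := \sum_(i < t.+1) aw i.
Definition alpha {R : realType} (t : nat) : R := aw t / Aw t.

Definition Lt {R : realType} {n : nat} (f : 'rV[R]_n -> R) (Df : 'rV[R]_n -> 'rV[R]_n -> R)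
  (Cf eps : R) (x v : nat -> 'rV[R]_n) (t : nat) : R :=
  (Aw t)^-1 * (\sum_(i < t.+1) aw i * f (x i)
     + \sum_(i < t.+1) aw i * (Df (x i) (alpha i *: (v i - x i)) / alpha i
                               - alpha i / 2 * Cf * (1 + eps))).

Definition Gt {R : realType} {n : nat} (f : 'rV[R]_n -> R) (Df : 'rV[R]_n -> 'rV[R]_n -> R)
  (Cf eps : R) (x v : nat -> 'rV[R]_n) (t : nat) : R :=
  f (x t.+1) - Lt f Df Cf eps x v t.

(* Main.v *)
Require Import Defs.
From HB Require Import structures.
From mathcomp Require Import all_boot all_order all_algebra.
From mathcomp Require Import all_classical all_reals all_analysis.
From mathcomp Require Import ring lra.
Import Order.TTheory GRing.Theory Num.Theory.
Import numFieldNormedType.Exports.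
Local Open Scope classical_set_scope.
Local Open Scope ring_scope.

Lemma aw_E (R : realType) (t : nat) : aw t = 2 * (t%:R : R) + 2.
Proof. by rewrite /aw natrD natrM. Qed.

Lemma Aw_E (R : realType) (t : nat) : Aw t = ((t%:R : R) + 1) * (t%:R + 2).
Proof.
elim: t => [|t IH].
  by rewrite /Aw big_ord1 aw_E mulr0n; lra.
rewrite /Aw big_ord_recr /= -/(Aw t) IH aw_E -natr1; lra.
Qed.

Lemma alpha_E (R : realType) (t : nat) : alpha t = 2 / ((t%:R : R) + 2).
Proof.
rewrite /alpha aw_E Aw_E.
have h1 : (t%:R : R) + 1 != 0 by rewrite lt0r_neq0 // ltr_wpDl.
have h2 : (t%:R : R) + 2 != 0 by rewrite lt0r_neq0 // ltr_wpDl.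
by field; rewrite h1 h2.
Qed.

Lemma alpha_gt0 (R : realType) (t : nat) : 0 < (alpha t : R).
Proof. by rewrite alpha_E divr_gt0 // ltr_wpDl. Qed.

Lemma alpha_le1 (R : realType) (t : nat) : (alpha t : R) <= 1.
Proof.
rewrite alpha_E ler_pdivrMr ?ltr_wpDl // mul1r lerDr //.
Qed.

Lemma Aw_gt0 (R : realType) (t : nat) : 0 < (Aw t : R).
Proof. by rewrite Aw_E mulr_gt0 // ltr_wpDl. Qed.

Lemma Aw_S (R : realType) (t : nat) : (Aw t.+1 : R) - aw t.+1 = Aw t.
Proof. by rewrite /Aw big_ord_recr /= addrK. Qed.

Lemma Aw_0m (R : realType) : (Aw 0 : R) - aw 0 = 0.
Proof. by rewrite /Aw big_ord1 subrr. Qed.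

Lemma vec_eq (R : realType) (n : nat) (a : R) (y z : 'rV[R]_n) :
  a *: y + (1 - a) *: z = z + a *: (y - z).
Proof.
by rewrite scalerBl scale1r scalerBr addrCA.
Qed.

Theorem mainTheorem5 (R : realType) (n s : nat)
  (f : 'rV[R]_n -> R)
  (F : 'rV[R]_n * 'rV[R]_s * 'rV[R]_s -> 'rV[R]_s) (phi : 'rV[R]_n * 'rV[R]_s -> R)
  (C : set 'rV[R]_n) (xstar : 'rV[R]_n) (eps : R) (x v : nat -> 'rV[R]_n) :
  abs_smooth_form f F phi ->
  C !=set0 -> compact C -> cvx_set C ->
  cvx_on f C ->
  has_ubound (curv_set f (abs_lin F phi) C) ->
  C xstar -> (forall y, C y -> f xstar <= f y) ->
  0 <= eps ->
  C (x 0%N) ->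
  (forall t, C (v t)) ->
  (forall t (w : 'rV[R]_n), C w ->
     abs_lin F phi (x t) (alpha t *: (v t - x t))
       <= abs_lin F phi (x t) (alpha t *: (w - x t))
          + 1 / 2 * eps * alpha t ^+ 2 * curv_const f (abs_lin F phi) C) ->
  (forall t, x t.+1 = (1 - alpha t) *: x t + alpha t *: v t) ->
  forall t : nat,
    f (x t.+1) - f xstar <= Gt f (abs_lin F phi) (curv_const f (abs_lin F phi) C) eps x v t
    /\ Gt f (abs_lin F phi) (curv_const f (abs_lin F phi) C) eps x v t
       <= 4 * curv_const f (abs_lin F phi) C / (t%:R + 2) * (1 + eps).
Proof.
move=> _ C0 _ cvxC cvxf ubC Cxs xsmin eps0 Cx0 Cv step xS t.
set D := abs_lin F phi.
set K := curv_const f D C.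
have hsup : has_sup (curv_set f D C).
  split=> //; case: C0 => c Cc.
  exists (2 / 1 ^+ 2 * `|f (c + 1 *: (c - c)) - f c - D c (1 *: (c - c))|).
  by exists c, c, 1; split.
have curv : forall y w (a : R), C y -> C w -> 0 < a -> a <= 1 ->
    `|f (y + a *: (w - y)) - f y - D y (a *: (w - y))| <= a ^+ 2 / 2 * K.
  move=> y w a Cy Cw a0 a1.
  have := sup_upper_bound hsup; move/(_ (2 / a ^+ 2 * `|f (y + a *: (w - y)) - f y - D y (a *: (w - y))|)).
  have -> : 2 / a ^+ 2 * `|f (y + a *: (w - y)) - f y - D y (a *: (w - y))| =
            `|f (y + a *: (w - y)) - f y - D y (a *: (w - y))| / (a ^+ 2 / 2).
    rewrite invf_div; ring.
  move=> /(_ _) H.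
  have : `|f (y + a *: (w - y)) - f y - D y (a *: (w - y))| / (a ^+ 2 / 2) <= K.
    apply: H; exists y, w, a; split=> //; rewrite invf_div; ring.
  by rewrite ler_pdivrMr ?divr_gt0 ?exprn_gt0 // mulrC.
have K0 : 0 <= K.
  case: C0 => c Cc.
  have := curv c c 1 Cc Cc ltr01 (lexx _).
  by rewrite expr1n => /(le_trans (normr_ge0 _)); lra.
have Cx : forall i, C (x i).
  elim=> [|i IH] //; rewrite xS addrC; apply: cvxC => //.
  by rewrite (ltW (alpha_gt0 _ _)) alpha_le1.
have up : forall i, f (x i.+1) <= f (x i) + D (x i) (alpha i *: (v i - x i)) + alpha i ^+ 2 / 2 * K.
  move=> i; have := curv _ _ _ (Cx i) (Cv i) (alpha_gt0 _ i) (alpha_le1 _ i).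
  rewrite -(@vec_eq _ _ (alpha i) (v i) (x i)).
  have -> : alpha i *: v i + (1 - alpha i) *: x i = x i.+1 by rewrite xS addrC.
  move=> /ler_normlP [_ h]; lra.
have low : forall i, D (x i) (alpha i *: (v i - x i)) <=
    alpha i * (f xstar - f (x i)) + alpha i ^+ 2 / 2 * K * (1 + eps).
  move=> i; have h1 := step i xstar Cxs.
  have := curv _ _ _ (Cx i) Cxs (alpha_gt0 _ i) (alpha_le1 _ i).
  rewrite -(@vec_eq _ _ (alpha i) xstar (x i)) => /ler_normlP [h2 _].
  have ai : 0 <= (alpha i : R) <= 1 by rewrite (ltW (alpha_gt0 _ i)) alpha_le1.
  have h3 := cvxf _ _ Cxs (Cx i) (alpha i) ai.
  have e1 : 0 <= alpha i ^+ 2 / 2 * K * eps by rewrite mulr_ge0 // mulr_ge0 // divr_ge0 // sqr_ge0.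
  move: h1 h2 h3 e1; rewrite -/D -/K => h1 h2 h3 e1.
  set fy := f _ in h2 h3. lra.
set g := fun i => aw i * f (x i) + aw i * (D (x i) (alpha i *: (v i - x i)) / alpha i).
set cc := fun i => aw i * (alpha i / 2 * K * (1 + eps)).
have aw_gt0 : forall i, 0 < (aw i : R) by move=> i; rewrite aw_E ltr_wpDl // mulr_ge0.
have Lform : Lt f D K eps x v t = (Aw t)^-1 * (\sum_(i < t.+1) g i - \sum_(i < t.+1) cc i).
  rewrite /Lt -sumrB -big_split /=; congr (_ * _); apply: eq_bigr => i _; rewrite /g /cc; ring.
split.
  have Lle : Lt f D K eps x v t <= f xstar.
    rewrite Lform mulrC ler_pdivrMr ?Aw_gt0 // /Aw mulr_sumr -sumrB.
    apply: ler_sum => i _.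
    have hD : D (x i) (alpha i *: (v i - x i)) / alpha i <=
        f xstar - f (x i) + alpha i / 2 * K * (1 + eps).
      rewrite ler_pdivrMr ?alpha_gt0 //; have := low i; lra.
    have -> : g i - cc i = aw i * (f (x i) + D (x i) (alpha i *: (v i - x i)) / alpha i
                 - alpha i / 2 * K * (1 + eps)) by rewrite /g /cc; ring.
    rewrite [f xstar * _]mulrC; apply: ler_wpM2l; [exact: ltW (aw_gt0 i) | lra].
  rewrite /Gt; lra.
have stepi : forall i, Aw i * f (x i.+1) <= (Aw i - aw i) * f (x i) + g i + 2 * K.
  move=> i; have hu := up i.
  have e1 : aw i * (D (x i) (alpha i *: (v i - x i)) / alpha i) = Aw i * D (x i) (alpha i *: (v i - x i)).
    rewrite /alpha; field; rewrite (lt0r_neq0 (Aw_gt0 _ i)) -aw_E (lt0r_neq0 (aw_gt0 i)) //.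
  have e2 : Aw i * (alpha i ^+ 2 / 2 * K) <= 2 * K.
    have -> : Aw i * (alpha i ^+ 2 / 2 * K) = (2 * (i%:R + 1) / (i%:R + 2)) * K.
      rewrite Aw_E alpha_E; field; rewrite lt0r_neq0 // ltr_wpDl //.
    apply: ler_wpM2r => //; rewrite ler_pdivrMr ?ltr_wpDl //; lra.
  have e3 := ler_wpM2l (ltW (Aw_gt0 _ i)) hu.
  rewrite /g e1; lra.
have ind : forall t, Aw t * f (x t.+1) <= \sum_(i < t.+1) g i + 2 * t.+1%:R * K.
  elim=> [|k IH].
    have := stepi 0%N; rewrite Aw_0m big_ord1 mul0r add0r mulr1n; lra.
  have := stepi k.+1; rewrite Aw_S big_ord_recr /=.
  have -> : (k.+2%:R : R) = k.+1%:R + 1 by rewrite natr1.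
  lra.
have hcc : \sum_(i < t.+1) cc i <= 2 * t.+1%:R * K * (1 + eps).
  have -> : 2 * t.+1%:R * K * (1 + eps) = \sum_(i < t.+1) (2 * K * (1 + eps)).
    by rewrite sumr_const card_ord -mulr_natr; ring.
  apply: ler_sum => i _; rewrite /cc.
  have -> : aw i * (alpha i / 2 * K * (1 + eps)) = (2 * (i%:R + 1) / (i%:R + 2)) * (K * (1 + eps)).
    rewrite aw_E alpha_E; field; rewrite lt0r_neq0 // ltr_wpDl //.
  have ke : 0 <= K * (1 + eps) by rewrite mulr_ge0 // addr_ge0.
  have -> : 2 * K * (1 + eps) = 2 * (K * (1 + eps)) by ring.
  apply: ler_wpM2r => //; rewrite ler_pdivrMr ?ltr_wpDl //; lra.
have hA := Aw_gt0 R t.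
have hi := ind t.
rewrite /Gt Lform.
have -> : 4 * K / (t%:R + 2) * (1 + eps) = (Aw t)^-1 * (4 * (t%:R + 1) * K * (1 + eps)).
  rewrite Aw_E; field; rewrite !lt0r_neq0 // ltr_wpDl //.
have -> : f (x t.+1) = (Aw t)^-1 * (Aw t * f (x t.+1)).
  by rewrite mulrA mulVf ?mul1r // lt0r_neq0.
rewrite -mulrBr; apply: ler_wpM2l; first by rewrite invr_ge0 ltW.
move: hcc hi; have -> : (t.+1%:R : R) = t%:R + 1 by rewrite natr1.
have e4 : 0 <= K * eps * (t%:R + 1) by rewrite !mulr_ge0 // addr_ge0.
lra.
Qed.
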